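(* For every integer $k\ge 2$, \[u(2^k-1-k,\;2^k-1)=\varepsilon(2^k-1-k,\;2^k-1)=2^{k-1}.\]
   Context: All matrices are binary (entries in $\{0,1\}$). For a nonempty set $S$ of columns of a binary matrix, let $z$ be the sum over the integers of the columns in $S$. $S$ is called $1$-free if no entry of $z$ equals $1$, and even if all entries of $z$ are even. For a binary $m\times n$ matrix $A$ with $m<n$: $\varepsilon(A)$ is the smallest cardinality of a nonempty even set of columns of $A$ (the minimum distance of the code $\{x\in\mathbb F_2^n: Ax=0\}$), and $u(A)$ (the stopping distance) is the smallest cardinality of a nonempty $1$-free set of columns of $A$. For $m<n$, $\varepsilon(m,n)$ and $u(m,n)$ denote the maxima of $\varepsilon(A)$, resp. $u(A)$, over all binary $m\times n$ matrices $A$. *)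

(* Defs.v *)
(* Binary matrices are 'M[bool]_(m, n); entries coerce to 0/1 in nat. *)
From mathcomp Require Import all_boot all_algebra.
Set Implicit Arguments. Unset Strict Implicit. Unset Printing Implicit Defensive.

Definition colsum (m n : nat) (A : 'M[bool]_(m, n)) (S : {set 'I_n}) (i : 'I_m) : nat :=
  \sum_(j in S) (A i j : nat).

Definition one_free (m n : nat) (A : 'M[bool]_(m, n)) (S : {set 'I_n}) : bool :=
  [forall i, colsum A S i != 1%N].

Definition even_set (m n : nat) (A : 'M[bool]_(m, n)) (S : {set 'I_n}) : bool :=
  [forall i, ~~ odd (colsum A S i)].

(* smallest cardinality of a nonempty even set (default n.+1 if none; never
   used when m < n, since then a nonempty even set exists) *)
Definition eps (m n : nat) (A : 'M[bool]_(m, n)) : nat :=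
  \big[minn/n.+1]_(S : {set 'I_n} | (S != set0) && even_set A S) #|S|.

Definition stopdist (m n : nat) (A : 'M[bool]_(m, n)) : nat :=
  \big[minn/n.+1]_(S : {set 'I_n} | (S != set0) && one_free A S) #|S|.

Definition eps_mn (m n : nat) : nat := \max_(A : 'M[bool]_(m, n)) eps A.
Definition u_mn (m n : nat) : nat := \max_(A : 'M[bool]_(m, n)) stopdist A.

(* Main.v *)
Require Import Defs.
From mathcomp Require Import all_boot all_algebra zify.
Set Implicit Arguments. Unset Strict Implicit. Unset Printing Implicit Defensive.

Definition sd (T : finType) (S R : {set T}) := (S :\: R) :|: (R :\: S).

Lemma sdK (T : finType) (S R : {set T}) : sd (sd S R) R = S.
Proof.
by apply/setP => j; rewrite !inE; case: (j \in S); case: (j \in R).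
Qed.

Lemma colsum_sd m n (A : 'M[bool]_(m, n)) S R i :
  odd (colsum A (sd S R) i) = odd (colsum A S i) (+) odd (colsum A R i).
Proof.
rewrite /colsum (big_setID S) [X in _ = odd X (+) _](big_setID R)
  [X in _ = _ (+) odd X](big_setID S).
have -> : sd S R :&: S = S :\: R.
  by apply/setP => j; rewrite !inE; case: (j \in S); case: (j \in R).
have -> : sd S R :\: S = R :\: S.
  by apply/setP => j; rewrite !inE; case: (j \in S); case: (j \in R).
rewrite setIC !oddD.
by case: (odd (\sum_(i0 in R :&: S) _)); case: (odd (\sum_(i0 in S :\: R) _));
  case: (odd (\sum_(i0 in R :\: S) _)).
Qed.

Lemma even_sd m n (A : 'M[bool]_(m, n)) S R :
  even_set A S -> even_set A R -> even_set A (sd S R).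
Proof.
move=> /forallP hS /forallP hR; apply/forallP => i.
by rewrite colsum_sd (negbTE (hS i)) (negbTE (hR i)).
Qed.

Lemma sdinj (T : finType) (R : {set T}) : injective (fun S => sd S R).
Proof. by move=> S1 S2 e; rewrite -(sdK S1 R) e sdK. Qed.

Lemma card_code m n k (A : 'M[bool]_(m, n)) : n = m + k ->
  2 ^ k <= #|[set S | even_set A S]|.
Proof.
move=> enk.
set C := [set S | even_set A S].
pose f (S : {set 'I_n}) := [set i | odd (colsum A S i)].
pose rep (y : {set 'I_m}) := odflt set0 [pick S | f S == y].
pose g S := (f S, sd S (rep (f S))).
have ginj : injective g.
  move=> S1 S2 [e1 e2]; rewrite e1 in e2.
  by rewrite -(sdK S1 (rep (f S2))) e2 sdK.
have sub : g @: setT \subset setX [set: {set 'I_m}] C.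
  apply/subsetP => z /imsetP [S _ ->]; rewrite !inE /=.
  rewrite /rep; case: pickP => [R /eqP fR | none]; last by have := none S; rewrite eqxx.
  apply/forallP => i; rewrite colsum_sd.
  have := congr1 (fun Y : {set 'I_m} => i \in Y) fR; rewrite /f !inE /= => ->.
  by rewrite addbb.
have := subset_leq_card sub; rewrite card_imset // cardsX.
rewrite -!powersetT !card_powerset !cardsT !card_ord => h.
have : 2 ^ m * 2 ^ k <= 2 ^ m * #|C| by rewrite -expnD -enk.
by rewrite leq_pmul2l // expn_gt0.
Qed.

Lemma col_half m n (A : 'M[bool]_(m, n)) (j : 'I_n) :
  2 * #|[set S in [set S | even_set A S] | j \in S]| <= #|[set S | even_set A S]|.
Proof.
set C := [set S | even_set A S].
set B := [set S : {set 'I_n} | j \in S].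
have -> : [set S in C | j \in S] = C :&: B.
  by apply/setP => S; rewrite !inE.
rewrite -[X in _ <= X](cardsID B C).
suff : #|C :&: B| <= #|C :\: B| by lia.
case: (set_0Vmem (C :&: B)) => [->|[T hT]]; first by rewrite cards0.
move: hT; rewrite !inE => /andP [eT jT].
rewrite -(card_imset _ (@sdinj _ T)).
apply: subset_leq_card; apply/subsetP => z /imsetP [S]; rewrite !inE => /andP [eS jS] ->.
by rewrite even_sd //= /sd !inE jS jT.
Qed.

Lemma sum_card_code m n (A : 'M[bool]_(m, n)) :
  2 * \sum_(S in [set S | even_set A S]) #|S| <= n * #|[set S | even_set A S]|.
Proof.
set C := [set S | even_set A S].
have -> : \sum_(S in C) #|S| = \sum_(j : 'I_n) #|[set S in C | j \in S]|.
  transitivity (\sum_(S in C) \sum_(j : 'I_n) (j \in S : nat)).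
    apply: eq_bigr => S _; rewrite -sum1_card big_mkcond /=.
    by apply: eq_bigr => j _; case: (j \in S).
  rewrite exchange_big /=; apply: eq_bigr => j _.
  rewrite -sum1_card big_mkcond [RHS]big_mkcond /=; apply: eq_bigr => S _.
  by rewrite [in RHS]inE; case: (S \in C); case: (j \in S).
rewrite big_distrr /=.
apply: (@leq_trans (\sum_(j < n) #|C|)).
  by apply: leq_sum => j _; apply: col_half.
by rewrite sum_nat_const card_ord.
Qed.

Lemma bigmin_le_seq (I : eqType) (r : seq I) (P : pred I) (F : I -> nat) x i0 :
  i0 \in r -> P i0 -> \big[minn/x]_(i <- r | P i) F i <= F i0.
Proof.
elim: r => [//|a r IH]; rewrite inE big_cons => /orP [/eqP <-|h] Pi.
  by rewrite Pi geq_minl.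
case: (P a); last exact: IH.
by rewrite geq_min IH ?orbT.
Qed.

Lemma bigmin_le (I : finType) (P : pred I) (F : I -> nat) x i0 :
  P i0 -> \big[minn/x]_(i | P i) F i <= F i0.
Proof. by move=> h; apply: bigmin_le_seq => //; rewrite mem_index_enum. Qed.

Lemma eps_le_card m n (A : 'M[bool]_(m, n)) S :
  S != set0 -> even_set A S -> eps A <= #|S|.
Proof.
by move=> h1 h2; rewrite /eps; apply: bigmin_le; rewrite h1 h2.
Qed.

Lemma plotkin m n k (A : 'M[bool]_(m, n)) : n = m + k -> n.+1 = 2 ^ k -> 0 < k ->
  eps A <= 2 ^ k.-1.
Proof.
move=> enk nk kp.
set C := [set S | even_set A S].
have hN := card_code A enk.
have hS := sum_card_code A.
have e0 : set0 \in C.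
  rewrite inE; apply/forallP => i; by rewrite /colsum big_set0.
set d := eps A.
have hd : d * (#|C| - 1) <= \sum_(S in C) #|S|.
  rewrite (big_setD1 _ e0).
  rewrite /= cards0 add0n.
  have -> : #|C| - 1 = #|C :\ set0| by rewrite (cardsD1 set0 C) e0; lia.
  rewrite mulnC -sum_nat_const; apply: leq_sum => S; rewrite !inE => /andP [h1 h2].
  exact: eps_le_card.
have e2 : 2 ^ k = 2 * 2 ^ k.-1 by rewrite -expnS prednK.
rewrite -/C in hS hN.
move: hd hS hN; rewrite e2 in nk *; move: nk.
move: (\sum_(S in C) #|S|) (#|C|) (2 ^ k.-1) => s N e h1 h2 h3 h4.
rewrite leqNgt; apply/negP => hde.
have : (e.+1) * (N - 1) <= d * (N - 1) by apply: leq_mul.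
nia.
Qed.
Lemma g_mono a b : a <= b -> 2 ^ a - a <= 2 ^ b - b.
Proof.
elim: b => [|b IH]; first by rewrite leqn0 => /eqP ->.
rewrite leq_eqVlt => /orP [/eqP ->//|]; rewrite ltnS => /IH h.
have : b < 2 ^ b by apply: ltn_expl.
rewrite expnS; lia.
Qed.

Definition enc p x := 2 ^ p - p + x - 2.

Lemma enc_lt k p x : p < k -> 0 < x < 2 ^ p -> enc p x < 2 ^ k - 1 - k.
Proof.
move=> hp hx; have := g_mono hp; have := ltn_expl p (isT : 1 < 2).
rewrite /enc expnS; lia.
Qed.

Lemma enc_inj p q x y : 0 < x < 2 ^ p -> 0 < y < 2 ^ q -> enc p x = enc q y ->
  p = q /\ x = y.
Proof.
have H : forall p q x y, p < q -> 0 < x < 2 ^ p -> 0 < y < 2 ^ q -> enc p x != enc q y.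
  move=> p' q' x' y' hpq hx hy; have := g_mono hpq; have := ltn_expl p' (isT : 1 < 2).
  have := ltn_expl q' (isT : 1 < 2).
  rewrite /enc expnS; lia.
move=> hx hy e; case: (ltngtP p q) => hpq.
- by have := H _ _ _ _ hpq hx hy; rewrite e eqxx.
- by have := H _ _ _ _ hpq hy hx; rewrite e eqxx.
- split => //; move: e; rewrite /enc hpq; have := ltn_expl q (isT : 1 < 2); lia.
Qed.

Definition tri p x v := (v == 2 ^ p + x) || (v == 2 ^ p) || (v == x).

Definition Am k : 'M[bool]_(2 ^ k - 1 - k, 2 ^ k - 1) :=
  \matrix_(i, j) [exists p : 'I_k, exists x : 'I_(2 ^ k),
     [&& 0 < (x : nat) < 2 ^ p, enc p x == i & tri p x (j : nat).+1]].
Lemma stop_nat k (P : nat -> bool) : ~~ P 0 ->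
  (forall p x, p < k -> 0 < x < 2 ^ p -> P (2 ^ p + x) + P (2 ^ p) + P x != 1) ->
  (exists v, v < 2 ^ k /\ P v) -> 2 ^ k <= 2 * \sum_(0 <= v < 2 ^ k) P v.
Proof.
move=> P0; elim: k => [|k IH] H [v [Hv Pv]].
  by move: Hv Pv; rewrite expn0 ltnS leqn0 => /eqP ->; rewrite (negbTE P0).
have H' : forall p x, p < k -> 0 < x < 2 ^ p -> P (2 ^ p + x) + P (2 ^ p) + P x != 1.
  by move=> p x hp; apply: H; apply: ltnW.
have e2 : 2 ^ k.+1 = 2 ^ k + 2 ^ k by rewrite expnS mul2n addnn.
have hk : 0 < 2 ^ k by rewrite expn_gt0.
rewrite e2 (big_cat_nat (leq0n (2 ^ k))) ?leq_addr //=.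
have -> : \sum_(2 ^ k <= i < 2 ^ k + 2 ^ k) P i = \sum_(0 <= i < 2 ^ k) P (i + 2 ^ k).
  by rewrite -{1}[2 ^ k]add0n big_addn addnK.
have Hx : forall x, 0 < x < 2 ^ k -> P (2 ^ k + x) + P (2 ^ k) + P x != 1.
  by move=> x; apply: H.
case P2: (P (2 ^ k)).
- have: \sum_(0 <= i < 2 ^ k) 1 <= \sum_(0 <= i < 2 ^ k) P i + \sum_(0 <= i < 2 ^ k) P (i + 2 ^ k).
    rewrite -big_split /= big_nat_cond [X in _ <= X]big_nat_cond.
    apply: leq_sum => i /andP[/andP[_ il] _].
    case: (posnP i) => [->|ip]; first by rewrite add0n P2 addn1.
    have := Hx i; rewrite ip il P2 addnC => /(_ isT).
    rewrite (addnC i); by case: (P i); case: (P (2 ^ k + i)).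
  rewrite sum_nat_const_nat muln1 subn0; lia.
- have E : \sum_(0 <= i < 2 ^ k) P (i + 2 ^ k) = \sum_(0 <= i < 2 ^ k) P i.
    apply: eq_big_nat => i /andP[_ il].
    case: (posnP i) => [->|ip]; first by rewrite add0n P2 (negbTE P0).
    have := Hx i; rewrite ip il P2 addnC => /(_ isT).
    rewrite (addnC i); by case: (P i); case: (P (2 ^ k + i)).
  rewrite E.
  suff : 2 ^ k <= 2 * \sum_(0 <= i < 2 ^ k) P i by lia.
  apply: IH => //.
  case: (ltnP v (2 ^ k)) => hv; first by exists v.
  exists (v - 2 ^ k); split; first by lia.
  have vp : 0 < v - 2 ^ k.
    rewrite subn_gt0 ltn_neqAle hv andbT; apply/eqP => ev.
    by move: Pv; rewrite -ev P2.
  have := Hx (v - 2 ^ k); rewrite vp /= P2 subnKC // => /(_ ltac:(lia)).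
  by rewrite Pv; case: (P (v - 2 ^ k)).
Qed.

Lemma stop_lower k (S : {set 'I_(2 ^ k - 1)}) :
  S != set0 -> one_free (Am k) S -> 2 ^ k <= 2 * #|S|.
Proof.
move=> Sn /forallP hof.
have k0 : 0 < 2 ^ k by rewrite expn_gt0.
pose P v := [exists j : 'I_(2 ^ k - 1), (j \in S) && ((j : nat).+1 == v)].
have sumP : forall v, \sum_(j in S) ((j : nat).+1 == v : nat) = P v.
  move=> v; case: (boolP (P v)) => [/existsP [j0 /andP [j0S /eqP e]] | nP].
    rewrite (bigD1 j0) //= e eqxx big1 // => j /andP [_ nj].
    apply/eqP; rewrite eqb0 -e eqSS; apply: contra nj => /eqP h.
    by apply/eqP; apply: val_inj.
  rewrite big1 // => j jS; apply/eqP; rewrite eqb0; apply: contra nP => h.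
  by apply/existsP; exists j; rewrite jS h.
have cnt : \sum_(0 <= v < (2 ^ k - 1).+1) P v = #|S|.
  rewrite big_nat_recl // big_mkord.
  have -> : P 0 = false by apply/existsP => [[j /andP [_ h]]].
  rewrite /= add0n -sum1_card [RHS]big_mkcond; apply: eq_bigr => j _ /=.
  have -> : P j.+1 = (j \in S).
    apply/existsP/idP => [[j' /andP [j'S /eqP h]] | jS]; last by exists j; rewrite jS eqxx.
    by have -> : j = j' by apply: val_inj; case: h.
  by case: (j \in S).
have e : (2 ^ k - 1).+1 = 2 ^ k by lia.
rewrite e in cnt; rewrite -cnt.
apply: stop_nat.
- by apply/existsP => [[j /andP [_ h]]].
- move=> p x hp hx.
  have hi := enc_lt hp hx.
  have := hof (Ordinal hi); rewrite /colsum.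
  have Ai : forall j, Am k (Ordinal hi) j = tri p x (j : nat).+1.
    move=> j; rewrite mxE; apply/existsP/idP.
    - case => p' /existsP [x' /and3P [hx' he ht]].
      have [ep ex] := enc_inj hx' hx (eqP he).
      by rewrite -ep -ex.
    - move=> ht; exists (Ordinal hp); apply/existsP.
      have hxk : x < 2 ^ k.
        apply: leq_trans (_ : 2 ^ p <= 2 ^ k); first by case/andP: hx.
        by rewrite leq_exp2l // ltnW.
      by exists (Ordinal hxk); rewrite /= hx eqxx ht.
  have -> : \sum_(j in S) (Am k (Ordinal hi) j : nat) = \sum_(j in S) (((j : nat).+1 == 2 ^ p + x) + ((j : nat).+1 == 2 ^ p)
        + ((j : nat).+1 == x)).
    apply: eq_bigr => j _; rewrite Ai /tri; case/andP: hx => hx1 hx2.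
    case: eqP => h1; case: eqP => h2; case: eqP => h3 //=; lia.
  by rewrite !big_split /= !sumP.
- case: (set_0Vmem S) => [eS|[j jS]]; first by rewrite eS eqxx in Sn.
  exists (j : nat).+1; split; first by have := ltn_ord j; lia.
  by apply/existsP; exists j; rewrite jS eqxx.
Qed.

Lemma stopdist_le_eps m n (A : 'M[bool]_(m, n)) : stopdist A <= eps A.
Proof.
rewrite /eps; apply: (big_ind (fun y => stopdist A <= y)).
- rewrite /stopdist; apply: (big_ind (fun y => y <= n.+1)) => //.
  + by move=> x y hx _; apply: leq_trans (geq_minl _ _) hx.
  + move=> S _; apply: leq_trans (max_card S) _; by rewrite card_ord.
- by move=> x y hx hy; rewrite leq_min hx hy.
- move=> S /andP [h1 /forallP h2]; rewrite /stopdist; apply: bigmin_le.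
  rewrite h1 /=; apply/forallP => i; apply: contra (h2 i) => /eqP -> //.
Qed.

Theorem theorem6p1 (k : nat) (hk : 2 <= k) :
  u_mn (2 ^ k - 1 - k) (2 ^ k - 1) = 2 ^ k.-1 /\
  eps_mn (2 ^ k - 1 - k) (2 ^ k - 1) = 2 ^ k.-1.
Proof.
have kp : 0 < k by lia.
have e2 : 2 ^ k = 2 * 2 ^ k.-1 by rewrite -expnS prednK.
have kl : k < 2 ^ k by apply: ltn_expl.
have up : forall A : 'M[bool]_(2 ^ k - 1 - k, 2 ^ k - 1), eps A <= 2 ^ k.-1.
  move=> A; apply: plotkin kp; lia.
have lo : 2 ^ k.-1 <= stopdist (Am k).
  rewrite /stopdist; apply: (big_ind (fun y => 2 ^ k.-1 <= y)).
  - lia.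
  - by move=> x y hx hy; rewrite leq_min hx hy.
  - move=> S /andP [h1 h2]; have := stop_lower h1 h2; lia.
split; apply/eqP; rewrite eqn_leq; apply/andP; split.
- apply/bigmax_leqP => A _; exact: leq_trans (stopdist_le_eps A) (up A).
- exact: leq_trans lo (leq_bigmax (Am k)).
- by apply/bigmax_leqP => A _; apply: up.
- exact: leq_trans (leq_trans lo (stopdist_le_eps _)) (leq_bigmax (Am k)).
Qed.
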